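(* Fix $0\le\alpha\le1$ and a collection $\mathcal X$ of finite sets. If $0<\beta_0\le\beta$ and $D_{\alpha,\beta_0}$ is a metric on $\mathcal X$, then $D_{\alpha,\beta}$ is a metric on $\mathcal X$. That is, the set of $\beta>0$ for which $D_{\alpha,\beta}$ is a metric on $\mathcal X$ is upward closed.
   Context: For finite sets $X,Y$ let $m(X,Y)=\min\{|X\setminus Y|,|Y\setminus X|\}$ and $M(X,Y)=\max\{|X\setminus Y|,|Y\setminus X|\}$. For $0\le\alpha\le1$ and $\beta>0$, $$D_{\alpha,\beta}(X,Y)=\begin{cases}\beta\,\dfrac{\alpha m(X,Y)+(1-\alpha)M(X,Y)}{|X\cap Y|+\beta\big(\alpha m(X,Y)+(1-\alpha)M(X,Y)\big)} & \text{if } X\cup Y\neq\emptyset,\\[2mm] 0 & \text{if } X=Y=\emptyset.\end{cases}$$ *)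

(* Defs.v *)
From HB Require Import structures.
From mathcomp Require Import all_boot all_order all_algebra.
From mathcomp Require Import finmap.
Set Implicit Arguments. Unset Strict Implicit. Unset Printing Implicit Defensive.
Import Order.TTheory GRing.Theory Num.Theory.
Local Open Scope fset_scope.
Local Open Scope ring_scope.

Section Dist.
Variables (T : choiceType) (R : realFieldType).

Definition msmall (X Y : {fset T}) : nat := minn #|` X `\` Y| #|` Y `\` X|.
Definition mlarge (X Y : {fset T}) : nat := maxn #|` X `\` Y| #|` Y `\` X|.

Definition Dab (alpha beta : R) (X Y : {fset T}) : R :=
  if X `|` Y == fset0 then 0
  else
    let w := alpha * (msmall X Y)%:R + (1 - alpha) * (mlarge X Y)%:R in
    beta * w / ((#|` X `&` Y|)%:R + beta * w).

Definition is_metric_on (C : {fset T} -> Prop) (d : {fset T} -> {fset T} -> R) : Prop :=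
  (forall x y, C x -> C y -> 0 <= d x y) /\
  (forall x y, C x -> C y -> (d x y = 0 <-> x = y)) /\
  (forall x y, C x -> C y -> d x y = d y x) /\
  (forall x y z, C x -> C y -> C z -> d x z <= d x y + d y z).
End Dist.

(* Main.v *)
Require Import Defs.
From HB Require Import structures.
From mathcomp Require Import all_boot all_order all_algebra.
From mathcomp Require Import finmap.
From mathcomp Require Import ring lra.
Import Order.TTheory GRing.Theory Num.Theory.
Local Open Scope ring_scope.

Section Aux.
Variable R : realFieldType.
Implicit Types lam d : R.

Definition gl (lam d : R) : R := lam * d / (1 + (lam - 1) * d).

Lemma gl0 lam : gl lam 0 = 0.
Proof. by rewrite /gl !mulr0 mul0r. Qed.

Lemma gl_mono lam s t : 1 <= lam -> 0 <= s -> s <= t -> gl lam s <= gl lam t.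
Proof.
move=> hl hs hst.
have hs1 : 0 < 1 + (lam - 1) * s by nra.
have ht1 : 0 < 1 + (lam - 1) * t by nra.
rewrite -subr_ge0.
have -> : gl lam t - gl lam s = lam * (t - s) / ((1 + (lam - 1) * s) * (1 + (lam - 1) * t)).
  rewrite /gl; field.
  by rewrite (gt_eqF hs1) (gt_eqF ht1).
apply: divr_ge0; first by apply: mulr_ge0; lra.
by apply: mulr_ge0; apply: ltW.
Qed.

Lemma gl_sub lam a b : 1 <= lam -> 0 <= a -> 0 <= b ->
  gl lam (a + b) <= gl lam a + gl lam b.
Proof.
move=> hl ha hb.
have h1 : 0 < 1 + (lam - 1) * a by nra.
have h2 : 0 < 1 + (lam - 1) * b by nra.
have h3 : 0 < 1 + (lam - 1) * (a + b) by nra.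
rewrite -subr_ge0.
have -> : gl lam a + gl lam b - gl lam (a + b) =
   lam * a * (lam - 1) * b / ((1 + (lam - 1) * a) * (1 + (lam - 1) * (a + b)))
 + lam * b * (lam - 1) * a / ((1 + (lam - 1) * b) * (1 + (lam - 1) * (a + b))).
  rewrite /gl; field.
  by rewrite (gt_eqF h1) (gt_eqF h2) (gt_eqF h3).
have hl1 : 0 <= lam - 1 by lra.
have hl0 : 0 <= lam by lra.
apply: addr_ge0; apply: divr_ge0;
  by rewrite ?mulr_ge0 // ltW // mulr_gt0.
Qed.

Lemma gl_eq (b0 b c w : R) : 0 < b0 -> b0 <= b -> 0 <= c -> 0 <= w ->
  b * w / (c + b * w) = gl (b / b0) (b0 * w / (c + b0 * w)).
Proof.
move=> hb0 hb hc hw.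
have [->|wpos] := eqVneq w 0.
  by rewrite !mulr0 !mul0r gl0.
have wp : 0 < w by rewrite lt0r wpos.
have d0 : 0 < c + b0 * w by nra.
have d1 : 0 < c + b * w by nra.
rewrite /gl.
have -> : 1 + (b / b0 - 1) * (b0 * w / (c + b0 * w)) = (c + b * w) / (c + b0 * w).
  by field; rewrite (gt_eqF hb0) (gt_eqF d0).
field.
by rewrite (gt_eqF hb0) (gt_eqF d0) (gt_eqF d1).
Qed.
End Aux.
Arguments gl {R}.

Theorem mainTheorem6 (T : choiceType) (R : realFieldType) (alpha beta0 beta : R)
  (C : {fset T} -> Prop) :
  0 <= alpha -> alpha <= 1 -> 0 < beta0 -> beta0 <= beta ->
  is_metric_on C (Dab alpha beta0) -> is_metric_on C (Dab alpha beta).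
Proof.
move=> ha0 ha1 hb0 hb [H1 [H2 [H3 H4]]].
have hbp : 0 < beta by apply: lt_le_trans hb.
have hlam : 1 <= beta / beta0 by rewrite ler_pdivlMr // mul1r.
have wge0 : forall X Y : {fset T},
  0 <= alpha * (msmall X Y)%:R + (1 - alpha) * (mlarge X Y)%:R.
  move=> X Y; apply: addr_ge0; apply: mulr_ge0 => //; by rewrite subr_ge0.
have key : forall X Y : {fset T}, Dab alpha beta X Y = gl (beta / beta0) (Dab alpha beta0 X Y).
  move=> X Y; rewrite /Dab; case: ifP => _; first by rewrite gl0.
  by apply: gl_eq.
split.
  move=> x y cx cy; rewrite key /gl; apply: divr_ge0.
    apply: mulr_ge0; [lra | exact: H1].
  have := H1 x y cx cy; nra.
split.
  move=> x y cx cy; rewrite -(H2 x y cx cy) key /gl.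
  have := H1 x y cx cy => hd.
  have hden : 0 < 1 + (beta / beta0 - 1) * Dab alpha beta0 x y by nra.
  split.
    move/eqP; rewrite mulf_eq0 invr_eq0 (negbTE (lt0r_neq0 hden)) orbF mulf_eq0.
    have -> : (beta / beta0 == 0) = false by apply/negbTE; apply: lt0r_neq0; lra.
    by move/eqP.
  by move=> ->; rewrite mulr0 mul0r.
split.
  by move=> x y cx cy; rewrite !key H3.
move=> x y z cx cy cz; rewrite !key.
apply: (le_trans (y := gl (beta / beta0) (Dab alpha beta0 x y + Dab alpha beta0 y z))).
  apply: gl_mono => //; [exact: H1 | exact: H4].
by apply: gl_sub => //; exact: H1.
Qed.
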